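(* Let $\mathcal F\subseteq 2^{[n]}$ be a simply rooted family of sets such that $\emptyset\in\mathcal F$, and let $A\in\mathcal F$ be non-empty. For $k\ge 0$ let $\mathcal C_k(\mathcal F,A)=\{[C,A]: C\subseteq A,\ [C,A]\subseteq\mathcal F,\ |A\setminus C|=k\}$. Then $$\sum_{k=0}^{|A|}(-1)^k|\mathcal C_k(\mathcal F,A)|=0.$$
   Context: $[n]=\{1,\dots,n\}$, $2^{[n]}$ its power set, $[C,D]=\{E\in 2^{[n]}: C\subseteq E\subseteq D\}$, $[i,A]=[\{i\},A]$. A family $\mathcal F\subseteq 2^{[n]}$ is simply rooted if for every non-empty $A\in\mathcal F$ there is $i\in A$ with $[i,A]\subseteq\mathcal F$. *)

(* Defs.v *)
From mathcomp Require Import all_boot all_order all_algebra.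
Set Implicit Arguments. Unset Strict Implicit. Unset Printing Implicit Defensive.

Definition setint (n : nat) (C D : {set 'I_n}) : {set {set 'I_n}} :=
  [set E : {set 'I_n} | (C \subset E) && (E \subset D)].

Definition simply_rooted (n : nat) (F : {set {set 'I_n}}) : Prop :=
  forall A, A \in F -> A != set0 ->
    exists2 i, i \in A & setint [set i] A \subset F.

Definition Ck (n : nat) (F : {set {set 'I_n}}) (A : {set 'I_n}) (k : nat)
  : {set {set {set 'I_n}}} :=
  [set setint C A | C in [set C : {set 'I_n} |
     [&& C \subset A, setint C A \subset F & #|A :\: C| == k]]].

(* Main.v *)
Require Import Defs.
From mathcomp Require Import all_boot all_order all_algebra.
From mathcomp Require Import zify.
Import GRing.Theory.
Local Open Scope ring_scope.

Section S.
Variable n : nat.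
Implicit Types C D X : {set 'I_n}.

Definition tog (j : 'I_n) C := if j \in C then C :\ j else j |: C.

Lemma togK j : involutive (tog j).
Proof.
move=> C; rewrite /tog; case: (boolP (j \in C)) => hj.
  by rewrite !inE eqxx /= setD1K.
by rewrite setU11 setU1K.
Qed.

Lemma tog_sub j X C : j \in X -> (tog j C \subset X) = (C \subset X).
Proof.
move=> jX; rewrite /tog; case: (boolP (j \in C)) => hj.
  by rewrite -{2}(setD1K hj) subUset sub1set jX.
by rewrite subUset sub1set jX.
Qed.

Lemma tog_sign j X C : j \in X ->
  (-1) ^+ #|X :\: tog j C| = - (-1) ^+ #|X :\: C| :> int.
Proof.
move=> jX; rewrite /tog; case: (boolP (j \in C)) => hj.
  have -> : X :\: (C :\ j) = j |: (X :\: C).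
    apply/setP => x; rewrite !inE; case: (eqVneq x j) => [->|] /=.
      by rewrite jX.
    by [].
  by rewrite cardsU1 !inE hj /= add1n exprS mulN1r.
have -> : X :\: (j |: C) = (X :\: C) :\ j.
  by apply/setP => x; rewrite !inE; case: (eqVneq x j).
rewrite [in RHS](cardsD1 j) !inE hj jX /= add1n exprS mulN1r opprK //.
Qed.

Lemma toggle0 X j (P : pred {set 'I_n}) : j \in X ->
  (forall C, P (tog j C) = P C) ->
  \sum_(C : {set 'I_n} | (C \subset X) && P C) (-1) ^+ #|X :\: C| = 0 :> int.
Proof.
move=> jX hP.
set s := (\sum_(C | _) _).
have : s = - s.
  rewrite {1}/s (reindex_inj (inv_inj (togK j))) /= /s -sumrN.
  apply: eq_big; first by move=> C; rewrite tog_sub // hP.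
  by move=> C _; rewrite tog_sign.
move=> h; lia.
Qed.

Variable F : {set {set 'I_n}}.
Hypothesis sr : simply_rooted F.
Hypothesis F0 : set0 \in F.

Definition G D := [set C : {set 'I_n} | (C \subset D) && (setint C D \subset F)].
Definition S D : int := \sum_(C in G D) (-1) ^+ #|D :\: C|.

Lemma S0 : S set0 = 1.
Proof.
rewrite /S (big_pred1 set0) ?setD0 ?cards0 ?expr0 //.
move=> C; rewrite !inE subset0; case: (eqVneq C set0) => [->|] //=.
apply/subsetP => E; rewrite inE subset0 andbC => /andP[/eqP -> _] //.
Qed.

Lemma Spos m D : (#|D| <= m)%N -> D != set0 -> S D = 0.
Proof.
elim: m D => [|m IH] D hD Dn0.
  by move: Dn0; rewrite -card_gt0; lia.
case: (boolP (D \in F)) => DF; last first.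
  rewrite /S big_pred0 // => C; rewrite inE; apply/negP => /andP[CD /subsetP h].
  by move: DF; rewrite h // inE CD subxx.
have [i iD hi] := sr D DF Dn0.
rewrite /S (bigID (fun C => i \in C)) /=.
have p1 : \sum_(C in G D | i \in C) (-1) ^+ #|D :\: C| =
          \sum_(C : {set 'I_n} | (C \subset D) && (i \in C)) (-1) ^+ #|D :\: C| :> int.
  apply: eq_bigl => C; rewrite inE; case: (boolP (i \in C)) => iC;
    rewrite ?andbF ?andbT //.
  case: (boolP (C \subset D)) => CD //=.
  apply: subset_trans hi; apply/subsetP => E; rewrite !inE => /andP[h1 ->].
  by rewrite andbT sub1set (subsetP h1).
have p2 : \sum_(C in G D | i \notin C) (-1) ^+ #|D :\: C| = - S (D :\ i).
  rewrite /S -sumrN; apply: eq_big => C.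
    rewrite !inE; apply/idP/idP.
      move=> /andP[/andP[CD CF] iC].
      have CD' : C \subset D :\ i.
        apply/subsetP => x xC; rewrite !inE (subsetP CD) // andbT.
        by apply/eqP => exi; move: iC; rewrite -exi xC.
      rewrite CD' /=; apply: subset_trans CF; apply/subsetP => E.
      by rewrite !inE => /andP[-> /subset_trans -> //]; apply: subD1set.
    move=> /andP[CD' CF]; have iC : i \notin C.
      by apply/negP => /(subsetP CD'); rewrite !inE eqxx.
    rewrite iC andbT (subset_trans CD' (subD1set _ _)) /=.
    apply/subsetP => E; rewrite inE => /andP[CE ED].
    case: (boolP (i \in E)) => iE.
      by apply: (subsetP hi); rewrite inE sub1set iE ED.
    apply: (subsetP CF); rewrite inE CE /=.
    apply/subsetP => x xE; rewrite !inE (subsetP ED) // andbT.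
    by apply/eqP => exi; move: iE; rewrite -exi xE.
  rewrite !inE => /andP[/andP[CD _] iC].
  rewrite [in LHS](cardsD1 i) !inE iD iC /= add1n exprS mulN1r.
  have -> : D :\: C :\ i = D :\ i :\: C.
    apply/setP => x; rewrite !inE.
    by case: (x == i); rewrite ?andbF.
  by [].
rewrite p1 p2.
case: (eqVneq (D :\ i) set0) => hDi.
  have hD1 : D = [set i].
    apply/setP => x; rewrite inE; apply/idP/idP; last by move/eqP ->.
    move=> xD; apply/negPn/negP => xi.
    by have := in_set0 x; rewrite -hDi !inE xi xD.
  rewrite hDi S0 (big_pred1 D) ?setDv ?cards0 ?expr0 ?subrr //.
  move=> C /=; rewrite hD1; apply/idP/idP.
    by move=> /andP[h1 h2]; rewrite eqEsubset h1 sub1set h2.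
  by move/eqP ->; rewrite subxx set11.
rewrite IH ?oppr0 ?addr0 //; last first.
  by move: hD; rewrite (cardsD1 i D) iD; lia.
have [j jD] := set0Pn _ hDi.
have ji : j != i by move: jD; rewrite !inE => /andP[].
have jD0 : j \in D by move: jD; rewrite !inE => /andP[].
apply: (@toggle0 D j (fun C => i \in C) jD0) => C; rewrite /tog; case: (j \in C); rewrite !inE.
  by rewrite eq_sym (negbTE ji).
by rewrite eq_sym (negbTE ji).
Qed.

End S.

Theorem lemma1 (n : nat) (F : {set {set 'I_n}}) (A : {set 'I_n}) :
  simply_rooted F -> set0 \in F -> A \in F -> A != set0 ->
  \sum_(0 <= k < #|A|.+1) (-1) ^+ k * (#|Ck F A k|)%:R = (0 : int).
Proof.
move=> sr F0 AF An0.
rewrite -[RHS](@Spos n F sr F0 _ A (leqnn _) An0) /S.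
have hc : forall k, #|Ck F A k| =
   #|[set C : {set 'I_n} | [&& C \subset A, setint C A \subset F & #|A :\: C| == k]]|.
  move=> k; rewrite /Ck card_in_imset // => C C'; rewrite !inE.
  move=> /andP[CA _] /andP[C'A _] heq; apply/eqP; rewrite eqEsubset.
  have h1 : C \in setint C' A by rewrite -heq inE subxx CA.
  have h2 : C' \in setint C A by rewrite heq inE subxx C'A.
  by move: h1 h2; rewrite !inE => /andP[-> _] /andP[-> _].
under eq_bigr => k _ do rewrite hc mulr_natr -sumr_const.
under eq_bigr => k _.
  rewrite (eq_bigr (fun C => (-1) ^+ #|A :\: C|)); last first.
    by move=> C; rewrite inE => /and3P[_ _ /eqP ->].
  rewrite (eq_bigl (fun C : {set 'I_n} => (C \in @G n F A) && (#|A :\: C| == k))); last first.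
    by move=> C; rewrite !inE andbA.
  rewrite big_mkcondr.
  over.
rewrite exchange_big /=; apply: eq_bigr => C CG.
rewrite -big_mkcond /=.
under eq_bigl => k do rewrite eq_sym.
rewrite big_nat1_eq /=.
have -> : (#|A :\: C| < #|A|.+1)%N by rewrite ltnS; apply: subset_leq_card; apply: subsetDl.
done.
Qed.
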